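(* Let $K$ be a $p$-adic number field with absolute value $|\cdot|$ and ring of integers $\mathcal{O}_K$, and let $P\in K[X]\setminus\mathcal{O}_K[X]$ be a polynomial having $n\ge1$ roots of absolute value $1$ in $\mathbb{C}_p$, counted with multiplicity. Then $$\#\{\xi\in\mu_\infty: P(\xi)\in\mu_\infty\}\le 2^8\,[K:K^{nr(\mathbb{Q}_p)}]^8\,p\,n^9.$$
   Context: $\mathbb{C}_p$ is the completion of an algebraic closure of $\mathbb{Q}_p$ containing $K$; $\mu_\infty$ is the group of roots of unity in $\mathbb{C}_p$. $K^{nr(\mathbb{Q}_p)}$ denotes the maximal unramified subextension of $K/\mathbb{Q}_p$, so $[K:K^{nr(\mathbb{Q}_p)}]$ is the ramification index of $K/\mathbb{Q}_p$. *)

(* Defs.v *)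
From mathcomp Require Import all_boot all_order all_algebra.
From mathcomp Require Import reals.
Set Implicit Arguments. Unset Strict Implicit. Unset Printing Implicit Defensive.
Import Order.TTheory GRing.Theory Num.Theory.
Local Open Scope ring_scope.

Section CpDefs.
Variables (R : realType) (L : fieldType) (abs : L -> R).

Definition is_nonarch_abs : Prop :=
  (forall x, 0 <= abs x) /\ (forall x, abs x = 0 <-> x = 0) /\
  (forall x y, abs (x * y) = abs x * abs y) /\
  (forall x y, abs (x + y) <= Num.max (abs x) (abs y)).

Definition abs_complete : Prop :=
  forall u : nat -> L,
    (forall eps : R, 0 < eps -> exists N, forall m k, (N <= m)%N -> (N <= k)%N ->
        abs (u m - u k) < eps) ->
    exists l, forall eps : R, 0 < eps -> exists N, forall k, (N <= k)%N ->
        abs (u k - l) < eps.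

Definition algebraic_over_Q (x : L) : Prop :=
  exists q : {poly rat}, q != 0 /\ root (map_poly ratr q) x.

(* (L, abs) is (an isometric copy of) C_p: an algebraically closed (assumed by
   the type), complete nonarchimedean valued field of characteristic 0, with
   |p| = 1/p, in which the algebraic numbers are dense (so L is the completion
   of an algebraic closure of Q_p). *)
Definition is_Cp (p : nat) : Prop :=
  prime p /\ is_nonarch_abs /\ (forall m : nat, m.+1%:R != 0 :> L) /\
  abs p%:R = (p%:R)^-1 /\ abs_complete /\
  (forall x (eps : R), 0 < eps -> exists y, algebraic_over_Q y /\ abs (x - y) < eps).

Definition in_Qp (x : L) : Prop :=
  forall eps : R, 0 < eps -> exists q : rat, abs (x - ratr q) < eps.

Definition is_subfield (K : L -> Prop) : Prop :=
  K 0 /\ K 1 /\ (forall x y, K x -> K y -> K (x - y)) /\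
  (forall x y, K x -> K y -> K (x * y)) /\ (forall x, K x -> x != 0 -> K x^-1).

Definition finite_over (F K : L -> Prop) : Prop :=
  exists d (b : 'I_d -> L),
    (forall i, K (b i)) /\
    (forall c : 'I_d -> L, (forall i, F (c i)) -> \sum_i c i * b i = 0 ->
        forall i, c i = 0) /\
    (forall x, K x -> exists c : 'I_d -> L, (forall i, F (c i)) /\ x = \sum_i c i * b i).

Definition p_adic_field (K : L -> Prop) : Prop :=
  is_subfield K /\ (forall x, in_Qp x -> K x) /\ finite_over in_Qp K.

Definition ramification_index (p : nat) (K : L -> Prop) (e : nat) : Prop :=
  (0 < e)%N /\
  exists pi, K pi /\ pi != 0 /\ abs pi ^+ e = abs p%:R /\
    (forall x, K x -> x != 0 -> exists k : int, abs x = abs pi ^ k).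

Definition is_root_of_unity (x : L) : Prop := exists k, (0 < k)%N /\ x ^+ k = 1.

Definition nroots_abs1 (P : {poly L}) (n : nat) : Prop :=
  exists (c : L) (s : seq L),
    P = c *: \prod_(z <- s) ('X - z%:P) /\ count (fun z => abs z == 1) s = n.

End CpDefs.

(* Main.v *)
Require Import Defs.
From mathcomp Require Import all_boot all_order all_algebra.
From mathcomp Require Import reals.
From mathcomp Require Import zify.
Import Order.TTheory GRing.Theory Num.Theory.

Lemma sq_le_pow2 w : (w * w <= 2 * 2 ^ w)%N.
Proof.
elim: w => [//|w IH].
have [w3|w3] := leqP 3 w.
  rewrite expnS; nia.
by case: w w3 IH => [|[|[|]]].
Qed.

Lemma nat_bound p w m : (1 < p)%N -> (p ^ w <= w * m + 1)%N -> (p ^ w <= 4 * (m * m) + 2)%N.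
Proof.
move=> p1 h.
have h2 : (2 ^ w <= p ^ w)%N.
  case: w h => [//|w] h; by rewrite leq_exp2r.
have h3 := sq_le_pow2 w.
have h4 : (0 < p ^ w)%N by rewrite expn_gt0; lia.
set x := (p ^ w)%N in h h2 h4 *.
nia.
Qed.

Lemma pigeon (T : eqType) (g : T -> nat) (n B : nat) (s : seq T) :
  (forall x, x \in s -> g x < n) ->
  (forall j, j < n -> count (fun x => g x == j) s <= B) -> size s <= n * B.
Proof.
move=> hs hB.
have e : size s = count (fun x => g x < n) s.
  by rewrite -count_predT; apply: eq_in_count => x /hs ->.
rewrite e.
have : n <= n by [].
elim: {-2}n => [|k IH] kn.
  by rewrite (eq_count (a2 := pred0)) ?count_pred0.
have e2 : count (fun x => g x < k.+1) s =
  count (fun x => g x < k) s + count (fun x => g x == k) s.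
  elim: (s) => //= x t ->; rewrite ltnS leq_eqVlt.
  case: (ltngtP (g x) k) => /= _; lia.
rewrite e2 mulSn addnC leq_add // ?hB ?IH //; lia.
Qed.

Lemma final_nat n e p : 0 < n -> 0 < e -> 1 < p ->
  n * (4 * ((n * e) * (n * e)) + 2) <= 2 ^ 8 * e ^ 8 * p * n ^ 9.
Proof.
move=> n0 e0 p1.
have h1 : n * (4 * ((n * e) * (n * e)) + 2) <= 6 * (e ^ 2 * n ^ 3).
  have -> : e ^ 2 * n ^ 3 = n * ((n * e) * (n * e)) by rewrite !expnS !expn0; lia.
  have y1 : 0 < (n * e) * (n * e) by rewrite !muln_gt0 n0 e0.
  set y := (n * e) * (n * e) in y1 *; nia.
apply: leq_trans h1 _.
have h2 : e ^ 2 <= e ^ 8 by rewrite leq_pexp2l.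
have h3 : n ^ 3 <= n ^ 9 by rewrite leq_pexp2l.
have h4 : e ^ 2 * n ^ 3 <= e ^ 8 * n ^ 9 by apply: leq_mul.
have h5 : 0 < e ^ 8 * n ^ 9 by rewrite muln_gt0 !expn_gt0 e0 n0.
set X := e ^ 8 * n ^ 9 in h4 h5.
have -> : 2 ^ 8 * e ^ 8 * p * n ^ 9 = 256 * p * X by rewrite /X; lia.
nia.
Qed.

Set Implicit Arguments. Unset Strict Implicit. Unset Printing Implicit Defensive.
Local Open Scope ring_scope.

Lemma ab0 (R : realType) (L : fieldType) (abs : L -> R) :
  is_nonarch_abs abs -> abs 0 = 0.
Proof. by move=> [_ [H _]]; apply/H. Qed.

Lemma abge0 (R : realType) (L : fieldType) (abs : L -> R) :
  is_nonarch_abs abs -> forall x, 0 <= abs x.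
Proof. by move=> [H _]. Qed.

Lemma abM (R : realType) (L : fieldType) (abs : L -> R) :
  is_nonarch_abs abs -> forall x y, abs (x * y) = abs x * abs y.
Proof. by move=> [_ [_ [H _]]]. Qed.

Lemma abD (R : realType) (L : fieldType) (abs : L -> R) :
  is_nonarch_abs abs -> forall x y, abs (x + y) <= Num.max (abs x) (abs y).
Proof. by move=> [_ [_ [_ H]]]. Qed.

Lemma abeq0 (R : realType) (L : fieldType) (abs : L -> R) :
  is_nonarch_abs abs -> forall x, (abs x == 0) = (x == 0).
Proof. move=> [_ [H _]] x; apply/eqP/eqP; apply H. Qed.

Lemma ab1 (R : realType) (L : fieldType) (abs : L -> R) :
  is_nonarch_abs abs -> abs 1 = 1.
Proof.
move=> H; have h := abM H 1 1; rewrite mulr1 in h.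
have nz : abs 1 != 0 by rewrite (abeq0 H) oner_eq0.
by apply: (mulfI nz); rewrite mulr1 -h.
Qed.

Lemma abN (R : realType) (L : fieldType) (abs : L -> R) :
  is_nonarch_abs abs -> forall x, abs (- x) = abs x.
Proof.
move=> H x; have h1 : abs (-1) = 1.
  have := abM H (-1) (-1); rewrite mulrNN mulr1 (ab1 H) => /esym/eqP.
  rewrite -expr2 (pexpr_eq1 _ (abge0 H _)) //; by move/eqP.
by rewrite -mulN1r (abM H) h1 mul1r.
Qed.

Lemma abB (R : realType) (L : fieldType) (abs : L -> R) :
  is_nonarch_abs abs -> forall x y, abs (x - y) <= Num.max (abs x) (abs y).
Proof. by move=> H x y; rewrite -(abN H y) abD. Qed.

Lemma absym (R : realType) (L : fieldType) (abs : L -> R) :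
  is_nonarch_abs abs -> forall x y, abs (x - y) = abs (y - x).
Proof. by move=> H x y; rewrite -(abN H) opprB. Qed.

Lemma abX (R : realType) (L : fieldType) (abs : L -> R) :
  is_nonarch_abs abs -> forall x k, abs (x ^+ k) = abs x ^+ k.
Proof.
move=> H x; elim=> [|k IH]; first by rewrite !expr0 (ab1 H).
by rewrite !exprS (abM H) IH.
Qed.

Lemma abV (R : realType) (L : fieldType) (abs : L -> R) :
  is_nonarch_abs abs -> forall x, abs (x^-1) = (abs x)^-1.
Proof.
move=> H x; have [->|nz] := eqVneq x 0; first by rewrite invr0 (ab0 H) invr0.
have : abs x * abs x^-1 = 1 by rewrite -(abM H) mulfV // (ab1 H).
have nz' : abs x != 0 by rewrite (abeq0 H).
by move=> h; rewrite -[RHS]mulr1 -h mulrA mulVf // mul1r.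
Qed.

Lemma abnat (R : realType) (L : fieldType) (abs : L -> R) :
  is_nonarch_abs abs -> forall k : nat, abs (k%:R) <= 1.
Proof.
move=> H; elim=> [|k IH]; first by rewrite (ab0 H).
rewrite -addn1 natrD; apply: le_trans (abD H _ _) _.
by rewrite ge_max IH (ab1 H) lexx.
Qed.

Lemma abprod (R : realType) (L : fieldType) (abs : L -> R) (I : Type)
  (r : seq I) (P : pred I) (F : I -> L) :
  is_nonarch_abs abs -> abs (\prod_(i <- r | P i) F i) = \prod_(i <- r | P i) abs (F i).
Proof.
move=> H; apply: (big_morph abs (abM H) (ab1 H)).
Qed.

Lemma absum_le (R : realType) (L : fieldType) (abs : L -> R) (I : Type)
  (r : seq I) (P : pred I) (F : I -> L) (c : R) :
  is_nonarch_abs abs -> 0 <= c -> (forall i, P i -> abs (F i) <= c) ->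
  abs (\sum_(i <- r | P i) F i) <= c.
Proof.
move=> H c0 hF; apply: (big_ind (fun x => abs x <= c)) => //.
  by rewrite (ab0 H).
by move=> x y hx hy; apply: le_trans (abD H _ _) _; rewrite ge_max hx hy.
Qed.

Lemma abne (R : realType) (L : fieldType) (abs : L -> R) :
  is_nonarch_abs abs -> forall x y, abs x != abs y ->
  abs (x - y) = Num.max (abs x) (abs y).
Proof.
move=> H.
suff key : forall x y, abs y < abs x -> abs (x - y) = abs x.
  move=> x y; case: (ltgtP (abs x) (abs y)) => // h _.
  - by rewrite (absym H) key // max_r // ltW.
  - by rewrite key // max_l // ltW.
move=> x y lt; apply/eqP; rewrite eq_le; apply/andP; split.
  by apply: le_trans (abB H _ _) _; rewrite ge_max lexx ltW.
have : abs x <= Num.max (abs (x - y)) (abs y).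
  by rewrite -{1}(subrK y x) abD.
rewrite le_max => /orP[//|h]; by rewrite ltNge h in lt.
Qed.

Lemma ab_unity (R : realType) (L : fieldType) (abs : L -> R) :
  is_nonarch_abs abs -> forall x, is_root_of_unity x -> abs x = 1.
Proof.
move=> H x [k [k0 hk]]; apply/eqP; rewrite -(pexpr_eq1 k0 (abge0 H _)).
by rewrite -(abX H) hk (ab1 H).
Qed.

Lemma prod_one_sub (L : fieldType) (z : L) (N : nat) :
  N.-primitive_root z -> \prod_(1 <= i < N) (1 - z ^+ i) = N%:R.
Proof.
move=> pz; have N0 := prim_order_gt0 pz.
have h := factor_Xn_sub_1 pz.
rewrite big_ltn // expr0 in h.
have h2 : ('X^N - 1 : {poly L}) = ('X - 1) * \sum_(i < N) 'X^i.
  have := subrXX ('X : {poly L}) 1 N; rewrite expr1n => ->; congr (_ * _).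
  rewrite (reindex_inj rev_ord_inj) /=; apply: eq_bigr => i _.
  rewrite expr1n mulr1; congr (_ ^+ _); case: i => i hi /=; lia.
have nz : ('X - 1 : {poly L}) != 0 by rewrite -polyC1 polyXsubC_eq0.
rewrite h2 polyC1 in h; apply (mulfI nz) in h.
have := congr1 (fun q => q.[1]) h; rewrite horner_prod /=.
under eq_bigr do rewrite hornerXsubC.
move=> ->.
rewrite horner_sum; under eq_bigr do rewrite hornerXn expr1n.
by rewrite sumr_const card_ord.
Qed.

Lemma ab_one_subX (R : realType) (L : fieldType) (abs : L -> R) :
  is_nonarch_abs abs -> forall z i, abs z = 1 -> abs (1 - z ^+ i) <= abs (1 - z).
Proof.
move=> H z i hz; have := subrXX (1 : L) z i; rewrite expr1n => ->.
rewrite (abM H) ler_piMr ?abge0 //; apply: absum_le => // j _.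
by rewrite expr1n mul1r (abX H) hz expr1n.
Qed.

Lemma ab_order_le (R : realType) (L : fieldType) (abs : L -> R) :
  is_nonarch_abs abs -> forall z N, N.-primitive_root z -> abs z = 1 ->
  abs (N%:R) <= abs (1 - z) ^+ N.-1.
Proof.
move=> H z N pz hz; rewrite -(prod_one_sub pz) (abprod _ _ _ H).
rewrite -subn1 -prodr_const_nat; apply: ler_prod => i _.
by rewrite (abge0 H) (ab_one_subX H).
Qed.

Lemma ab_coprime (R : realType) (L : fieldType) (abs : L -> R) (p M : nat) :
  is_nonarch_abs abs -> prime p -> abs (p%:R : L) < 1 -> coprime p M ->
  ~ (abs (M%:R : L) < 1).
Proof.
move=> H pp hp cop hM.
have [a _ ] := Bezoutl M (prime_gt0 pp).
rewrite (eqP cop) => /dvdnP [q hq].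
have e : (1 : L) = (q%:R * p%:R) - a%:R * M%:R.
  by rewrite -!natrM -hq natrD addrK.
have : abs (1 : L) < 1.
  rewrite e; apply: le_lt_trans (abB H _ _) _; rewrite gt_max (abM H) (abM H).
  apply/andP; split.
    by apply: le_lt_trans hp; rewrite ler_piMl ?abge0 ?abnat.
  by apply: le_lt_trans hM; rewrite ler_piMl ?abge0 ?abnat.
by rewrite (ab1 H) ltxx.
Qed.

Lemma key_unity (R : realType) (L : fieldType) (abs : L -> R) (p m : nat) (zeta : L) :
  is_nonarch_abs abs -> prime p -> 0 < abs (p%:R : L) < 1 -> (0 < m)%N ->
  is_root_of_unity zeta -> abs (zeta - 1) ^+ m <= abs (p%:R : L) ->
  exists w, zeta ^+ (p ^ w) = 1 /\ (p ^ w <= w * m + 1)%N.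
Proof.
move=> H pp /andP[hp0 hp1] m0 hz hm.
have az := ab_unity H hz.
set d := abs (1 - zeta).
have dE : abs (zeta - 1) = d by rewrite /d (absym H).
rewrite dE in hm.
have d0 : 0 <= d by apply: abge0.
have d1 : d < 1.
  rewrite ltNge; apply/negP => h.
  have : 1 <= d ^+ m by rewrite exprn_ege1.
  move=> h2; have := le_trans h2 hm; by rewrite leNgt hp1.
case: hz => k [k0 hk].
have [N pz _] := prim_order_exists k0 hk.
have N0 := prim_order_gt0 pz.
have [M cop NE] := pfactor_coprime pp N0.
set v := logn p N in NE.
set eta := zeta ^+ (p ^ v).
have M0 : (0 < M)%N by move: N0; rewrite NE muln_gt0 => /andP[].
have etaM : eta ^+ M = 1.
  by rewrite /eta -exprM mulnC -NE prim_expr_order.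
have [M' pe dM] := prim_order_exists M0 etaM.
have M'0 := prim_order_gt0 pe.
have aeta : abs eta = 1 by rewrite /eta (abX H) az expr1n.
have M'1 : M' = 1%N.
  apply/eqP; rewrite eqn_leq M'0 andbT leqNgt; apply/negP => M'gt.
  have cop' : coprime p M' by apply: coprime_dvdr dM cop.
  apply: (ab_coprime H pp hp1 cop').
  apply: le_lt_trans (ab_order_le H pe aeta) _.
  apply: le_lt_trans (ler_iXnr _ (abge0 H _) _) _.
  - by rewrite -subn1 subn_gt0.
  - by apply: le_trans (ab_one_subX H _ az) (ltW d1).
  by apply: le_lt_trans (ab_one_subX H _ az) d1.
have eta1 : eta = 1 by have := prim_expr_order pe; rewrite M'1 expr1.
have : (N %| p ^ v)%N by rewrite (prim_order_dvd pz) -/eta eta1.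
case/(dvdn_pfactor _ _ pp) => w _ Nw.
exists w; split; first by rewrite -Nw prim_expr_order.
rewrite leqNgt; apply/negP => lt.
have h1 := ab_order_le H pz az.
rewrite Nw natrX (abX H) -/d in h1.
have : d ^+ (p ^ w).-1 <= d ^+ (w * m).+1.
  apply: ler_wiXn2l => //; first exact: ltW.
  by rewrite -ltnS prednK ?expn_gt0 ?prime_gt0 // -addn1.
rewrite exprS mulnC exprM => h2.
have h3 : d * (d ^+ m) ^+ w <= d * abs (p%:R : L) ^+ w.
  rewrite ler_wpM2l //; apply: lerXn2r => //; by rewrite nnegrE ?exprn_ge0 ?(abge0 H).
have h4 : d * abs (p%:R : L) ^+ w < abs (p%:R : L) ^+ w.
  by rewrite gtr_pMl ?exprn_gt0.
have := le_trans h1 (le_trans h2 h3); by rewrite leNgt h4.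
Qed.

Lemma class_bound (R : realType) (L : fieldType) (abs : L -> R) (p m : nat) (T : seq L) :
  is_nonarch_abs abs -> prime p -> 0 < abs (p%:R : L) < 1 -> (0 < m)%N ->
  uniq T -> (forall z, z \in T -> is_root_of_unity z /\ abs (z - 1) ^+ m <= abs (p%:R : L)) ->
  (size T <= 4 * (m * m) + 2)%N.
Proof.
move=> H pp hp m0 uT hT.
set B := (4 * (m * m) + 2)%N.
set W := trunc_log p B.
have p1 := prime_gt1 pp.
have pW : (p ^ W <= B)%N by apply: (trunc_logP p1); rewrite /B addn2.
have allr : all (root ('X^(p ^ W) - 1 : {poly L})) T.
  apply/allP => z zT; have [hz hm] := hT z zT.
  have [w [hw hb]] := key_unity H pp hp m0 hz hm.
  have wW : (w <= W)%N by apply: trunc_log_max => //; exact: (nat_bound _ _ _ p1 hb).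
  rewrite rootE !hornerE -(subnK wW) expnD mulnC exprM hw expr1n subrr //.
have nz : ('X^(p ^ W) - 1 : {poly L}) != 0.
  by rewrite -size_poly_eq0 size_Xn_sub_1 ?expn_gt0 ?prime_gt0.
have := max_poly_roots nz allr uT.
rewrite size_Xn_sub_1 ?expn_gt0 ?prime_gt0 // ltnS => h.
by apply: leq_trans h pW.
Qed.

Lemma coef_prod_le (R : realType) (L : fieldType) (abs : L -> R) (r : seq L) :
  is_nonarch_abs abs -> forall i,
  abs ((\prod_(z <- r) ('X - z%:P))`_i) <= \prod_(z <- r) Num.max 1 (abs z).
Proof.
move=> H; elim: r => [|z r IH] i.
  rewrite !big_nil coef1; case: (i == 0%N); by rewrite ?(ab1 H) ?(ab0 H).
have M0 : 0 <= \prod_(y <- r) Num.max 1 (abs y).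
  by apply: prodr_ge0 => y _; rewrite le_max ler01.
rewrite !big_cons mulrBl coefB coefXM coefCM.
apply: le_trans (abB H _ _) _; rewrite ge_max; apply/andP; split.
  case: (i == 0%N); first by rewrite (ab0 H) mulr_ge0 // le_max ler01.
  by apply: le_trans (IH _) _; rewrite ler_peMl // le_max lexx.
rewrite (abM H); apply: ler_pM; [exact: abge0 | exact: abge0 | | exact: IH].
by rewrite le_max lexx orbT.
Qed.

Lemma min_lemma (R : realType) (L : eqType) (s : seq L) (f : L -> R) :
  (forall x, 0 <= f x) -> (0 < size s)%N ->
  exists2 x, x \in s & f x ^+ size s <= \prod_(y <- s) f y.
Proof.
move=> f0; elim: s => [//|a s IH] _.
case: s IH => [|b s] IH.
  by exists a; rewrite ?mem_head // big_cons big_nil expr1 mulr1.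
have [x xs hx] := IH isT.
rewrite big_cons /=.
have [le|lt] := leP (f a) (f x).
  exists a; first exact: mem_head.
  rewrite exprS ler_wpM2l //; apply: le_trans hx.
  by apply: lerXn2r => //; rewrite nnegrE.
exists x; first by rewrite in_cons xs orbT.
rewrite exprS; apply: ler_pM; [exact: f0 | exact: exprn_ge0 | exact: ltW | exact: hx].
Qed.

Lemma discrete (R : realType) (L : fieldType) (abs : L -> R) (K : L -> Prop) (pi x : L) :
  is_nonarch_abs abs -> 0 < abs pi < 1 ->
  (forall y, K y -> y != 0 -> exists k : int, abs y = abs pi ^ k) ->
  K x -> 1 < abs x -> (abs pi)^-1 <= abs x.
Proof.
move=> H /andP[p0 p1] hK Kx hx.
have x0 : x != 0 by apply/eqP => e; rewrite e (ab0 H) ltr10 in hx.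
have [k e] := hK x Kx x0; rewrite e in hx *; clear e.
case: k => [k|k] in hx *.
  have : abs pi ^+ k <= 1 by rewrite exprn_ile1 // ltW.
  by move: hx => /= hx h; have := lt_le_trans hx h; rewrite ltxx.
rewrite NegzE -exprnN lef_pV2 ?posrE ?exprn_gt0 //.
by rewrite ler_iXnr // ltW.
Qed.

Lemma near_root (R : realType) (L : fieldType) (abs : L -> R) (c : L) (r : seq L)
  (a : R) (xi : L) (i : nat) :
  is_nonarch_abs abs -> 0 < a ->
  a^-1 <= abs ((c *: \prod_(z <- r) ('X - z%:P))`_i) ->
  abs xi = 1 -> abs ((c *: \prod_(z <- r) ('X - z%:P)).[xi]) = 1 ->
  \prod_(z <- r | abs z == 1) abs (xi - z) <= a.
Proof.
move=> H a0 hi hxi hP.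
set Mr := \prod_(z <- r) Num.max 1 (abs z).
set P1 := \prod_(z <- r | abs z == 1) abs (xi - z).
have hX : a^-1 <= abs c * Mr.
  apply: le_trans hi _; rewrite coefZ (abM H) ler_wpM2l ?(abge0 H) //.
  exact: coef_prod_le.
have hE : P1 * (abs c * Mr) = 1.
  rewrite -hP hornerZ horner_prod (abM H) (abprod _ _ _ H).
  under [X in _ = _ * X]eq_bigr do rewrite hornerXsubC.
  rewrite (bigID (fun z => abs z == 1)) /= -/P1.
  rewrite /Mr (bigID (fun z => abs z == 1)) /= big1; last first.
    by move=> z /eqP ->; rewrite maxxx.
  rewrite mul1r.
  have -> : \prod_(z <- r | abs z != 1) Num.max 1 (abs z) =
            \prod_(z <- r | abs z != 1) abs (xi - z).
    apply: eq_bigr => z hz; rewrite (abne H); first by rewrite hxi.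
    by rewrite hxi eq_sym.
  by rewrite mulrCA.
have P10 : 0 <= P1 by apply: prodr_ge0 => z _; apply: abge0.
have h1 : 1 <= abs c * Mr * a.
  by rewrite -(mulVf (lt0r_neq0 a0)) ler_wpM2r // ltW.
rewrite -[P1]mulr1; apply: le_trans (ler_wpM2l P10 h1) _.
by rewrite mulrA hE mul1r.
Qed.

Theorem mainTheorem11 (R : realType) (L : closedFieldType) (p : nat)
    (abs : L -> R) (K : L -> Prop) (e : nat) (P : {poly L}) (n : nat) :
  is_Cp abs p ->
  p_adic_field abs K ->
  ramification_index abs p K e ->
  (forall i, K P`_i) ->
  (exists i, 1 < abs P`_i) ->
  (1 <= n)%N ->
  nroots_abs1 abs P n ->
  forall s : seq L, uniq s ->
    (forall xi, xi \in s -> is_root_of_unity xi /\ is_root_of_unity (horner P xi)) ->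
    (size s <= 2 ^ 8 * e ^ 8 * p * n ^ 9)%N.
Proof.
move=> hCp _ hram hPK hbig n1 hroots s us hs.
case: hCp => pp [H [_ [hp _]]].
have p1 := prime_gt1 pp.
have hp01 : 0 < abs (p%:R : L) < 1.
  rewrite hp invr_gt0 ltr0n prime_gt0 //= invf_lt1 ?ltr0n ?prime_gt0 //.
  by rewrite ltr1n.
case: hram => e0 [pi [Kpi [pi0 [hpie hdisc]]]].
set a := abs pi.
have a0 : 0 < a by rewrite lt0r (abeq0 H) pi0 (abge0 H).
have a1 : a < 1.
  rewrite ltNge; apply/negP => h.
  have := exprn_ege1 e h; rewrite hpie => h2.
  by case/andP: hp01 => _ h3; have := le_lt_trans h2 h3; rewrite ltxx.
case: hroots => c [r [PE hcnt]].
case: hbig => i hi.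
have hai : a^-1 <= abs P`_i.
  by apply: (discrete H _ hdisc (hPK i) hi); rewrite a0 a1.
set r1 := filter (fun z => abs z == 1) r.
have sr1 : size r1 = n by rewrite size_filter.
set g := fun xi => find (fun z => abs (xi - z) ^+ n <= a) r1.
have hasg : forall xi, xi \in s -> has (fun z => abs (xi - z) ^+ n <= a) r1.
  move=> xi xis; have [u1 u2] := hs xi xis.
  have ax := ab_unity H u1; have aP := ab_unity H u2.
  rewrite PE in hai aP.
  have hn := near_root H a0 hai ax aP.
  rewrite -big_filter -/r1 in hn.
  have [z zr hz] := min_lemma (s := r1) (f := fun z => abs (xi - z)) (fun z => abge0 H _)
                      (leq_trans n1 (eq_leq (esym sr1))).
  apply/hasP; exists z => //; rewrite -sr1; exact: le_trans hz hn.
apply: (leq_trans _ (final_nat _ _ _ n1 e0 p1)).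
apply: (pigeon _ g n).
  by move=> xi /hasg; rewrite has_find sr1.
move=> j jn; rewrite -size_filter.
set sj := filter _ s.
have usj : uniq sj by apply: filter_uniq.
have memsj : forall xi, xi \in sj -> xi \in s /\ abs (xi - nth 0 r1 j) ^+ n <= a.
  move=> xi; rewrite mem_filter => /andP[/eqP gj xis]; split => //.
  have := nth_find 0 (hasg xi xis); by rewrite -/(g xi) gj.
case E: sj => [|xi0 t]; first by [].
rewrite -E.
have xi0s : xi0 \in sj by rewrite E mem_head.
have [xi0s' _] := memsj xi0 xi0s.
have u0 := (hs xi0 xi0s').1.
have ax0 := ab_unity H u0.
have xi00 : xi0 != 0 by rewrite -(abeq0 H) ax0 oner_eq0.
have inj : injective (fun x => x / xi0) by apply: mulIf; rewrite invr_eq0.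
rewrite -(size_map (fun x => x / xi0)).
apply: (@class_bound R L abs p (n * e)%N _ H pp hp01).
- by rewrite muln_gt0 n1 e0.
- by rewrite map_inj_uniq.
move=> z /mapP [xi xisj ->].
have [xis hxi] := memsj xi xisj.
have [_ hxi0] := memsj xi0 xi0s.
have u := (hs xi xis).1.
have axi := ab_unity H u.
split.
  case: u => k1 [k10 hk1]; case: u0 => k2 [k20 hk2].
  exists (k1 * k2)%N; split; first by rewrite muln_gt0 k10.
  rewrite exprMn exprVn exprM hk1 expr1n mulnC exprM hk2 expr1n invr1 mulr1 //.
have e1 : xi / xi0 - 1 = (xi - xi0) / xi0 by rewrite mulrBl divff.
rewrite e1 (abM H) (abV H) ax0 invr1 mulr1.
set zj := nth 0 r1 j in hxi hxi0.
have hle : abs (xi - xi0) ^+ n <= a.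
  have : abs (xi - xi0) <= Num.max (abs (xi - zj)) (abs (xi0 - zj)).
    have -> : xi - xi0 = (xi - zj) - (xi0 - zj) by rewrite opprB addrA subrK.
    exact: abB.
  rewrite le_max => /orP[h|h].
    apply: le_trans hxi; apply: lerXn2r => //; by rewrite nnegrE (abge0 H).
  apply: le_trans hxi0; apply: lerXn2r => //; by rewrite nnegrE (abge0 H).
rewrite exprM -hpie; apply: lerXn2r => //; rewrite nnegrE ?exprn_ge0 ?(abge0 H) //.
Qed.
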